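(* Let $X$ be a real Banach space with $\dim X\ge 2$. If $S_P(X)<\frac{3-\sqrt5}{4}$, then $X$ has uniform normal structure.
   Context: For a real Banach space $X$ with unit sphere $S_X$, the P-angle constant is $S_P(X)=\sup\left\{\frac{\|x+y\|^2+\|x-y\|^2-4}{2\|x+y\|\,\|x-y\|}: x,y\in S_X,\ x\neq \pm y\right\}$. For a bounded closed convex $A\subseteq X$, $\operatorname{diam}A=\sup\{\|x-y\|:x,y\in A\}$ and the Chebyshev radius is $r(A)=\inf_{y\in A}\sup_{x\in A}\|x-y\|$. $X$ has uniform normal structure if $\inf\{\operatorname{diam}A/r(A)\}>1$, the infimum over all bounded closed convex subsets $A$ of $X$ with $\operatorname{diam}A>0$. *)

(* Defs.v *)
From HB Require Import structures.
From mathcomp Require Import all_boot all_order all_algebra.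
From mathcomp Require Import all_classical all_reals all_analysis.
Set Implicit Arguments. Unset Strict Implicit. Unset Printing Implicit Defensive.
Import Order.TTheory GRing.Theory Num.Theory.
Import numFieldNormedType.Exports.
Local Open Scope classical_set_scope.
Local Open Scope ring_scope.

Definition unit_sphere (R : realType) (X : normedModType R) : set X :=
  [set x | `|x| = 1].

Definition SP_const (R : realType) (X : normedModType R) : \bar R :=
  ereal_sup [set ((`|p.1 + p.2| ^+ 2 + `|p.1 - p.2| ^+ 2 - 4)
                   / (2 * `|p.1 + p.2| * `|p.1 - p.2|))%:E
            | p in [set x : X * X | unit_sphere x.1 /\ unit_sphere x.2
                                    /\ x.1 <> x.2 /\ x.1 <> - x.2]]%classic.

Definition convex_subset (R : realType) (X : normedModType R) (A : set X) :=
  forall x y (t : R), A x -> A y -> 0 <= t -> t <= 1 -> A (t *: x + (1 - t) *: y).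

Definition diam (R : realType) (X : normedModType R) (A : set X) : \bar R :=
  ereal_sup [set (`|p.1 - p.2|)%:E | p in [set p : X * X | A p.1 /\ A p.2]]%classic.

Definition cheb_radius (R : realType) (X : normedModType R) (A : set X) : \bar R :=
  ereal_inf [set ereal_sup [set (`|x - y|)%:E | x in A] | y in A]%classic.

(* Uniform normal structure: inf { diam A / r(A) : A bounded closed convex,
   diam A > 0 } > 1. For bounded A these quantities are finite reals. *)
Definition uniform_normal_structure (R : realType) (X : normedModType R) : Prop :=
  (1%:E < ereal_inf [set ((fine (diam A)) / (fine (cheb_radius A)))%:E
                    | A in [set A : set X | bounded_set A /\ closed A
                              /\ convex_subset A /\ (0%:E < diam A)%E]]%classic)%E.

Definition dim_ge2 (R : realType) (X : normedModType R) : Prop :=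
  exists x y : X, forall a b : R, a *: x + b *: y = 0 -> a = 0 /\ b = 0.

(* Main.v *)
Require Import Defs.
From HB Require Import structures.
From mathcomp Require Import all_boot all_order all_algebra.
From mathcomp Require Import all_classical all_reals all_analysis.
From mathcomp Require Import ring lra.
Import Order.TTheory GRing.Theory Num.Theory.
Import numFieldNormedType.Exports.
Local Open Scope ring_scope.

Section Aux.
Variables (R : realType) (X : normedModType R).

Lemma tri3 (a b x y : X) : `|a + b| <= `|x + y| + `|x - a| + `|y - b|.
Proof.
have -> : a + b = (x + y) - ((x - a) + (y - b)).
  by rewrite opprD !opprB addrACA !addrA [x + a]addrC addrK addrAC addrK.
apply: le_trans (ler_normB _ _) _; rewrite -[X in _ <= X]addrA lerD2l; exact: ler_normD.
Qed.

Lemma tri3' (a b x y : X) : `|a - b| <= `|x - y| + `|x - a| + `|y - b|.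
Proof.
have := tri3 a (- b) x (- y); by rewrite -opprD normrN.
Qed.


Lemma normalize (a : X) : 0 < `|a| -> `|a| <= 1 ->
  `|(`|a|)^-1 *: a| = 1 /\ `|(`|a|)^-1 *: a - a| = 1 - `|a|.
Proof.
move=> a0 a1; have an : `|a| != 0 by rewrite gt_eqF.
split; first by rewrite normrZ ger0_norm ?invr_ge0 // mulVf.
have -> : (`|a|)^-1 *: a - a = ((`|a|)^-1 - 1) *: a by rewrite scalerBl scale1r.
rewrite normrZ ger0_norm; last by rewrite subr_ge0 invr_ge1 // unitfE.
by rewrite mulrBl mulVf // mul1r.
Qed.

Variable k : R.
Hypothesis k0 : 0 <= k.
Hypothesis k1 : 0 <= 191/1000 - k.
Hypothesis HSP : forall x y : X, `|x| = 1 -> `|y| = 1 -> x <> y -> x <> - y ->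
  (`|x + y| ^+ 2 + `|x - y| ^+ 2 - 4) / (2 * `|x + y| * `|x - y|) < k.

Lemma unit_key (a b : X) : `|a| <= 1 -> `|b| <= 1 -> 4/5 <= `|a - b| ->
  `|a + b| <= 2 - 1/1000.
Proof.
move=> a1 b1 ab; rewrite leNgt; apply/negP => H.
have k1' : k <= 191/1000 by rewrite -subr_ge0; exact: k1.
have hab := ler_normD a b.
have a0 : 1 - 1/1000 < `|a| by lra.
have b0 : 1 - 1/1000 < `|b| by lra.
have [xn xa] := @normalize a ltac:(lra) a1.
have [yn yb] := @normalize b ltac:(lra) b1.
set x := (`|a|)^-1 *: a in xn xa.
set y := (`|b|)^-1 *: b in yn yb.
have hA := tri3 a b x y; have hB := tri3' a b x y.
rewrite xa yb in hA hB.
have Ale : `|x + y| <= 2 by apply: le_trans (ler_normD _ _) _; rewrite xn yn; lra.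
have Ap : 0 < `|x + y| by lra.
have Bp : 0 < `|x - y| by lra.
have Ble : `|x - y| <= 2 by apply: le_trans (ler_normB _ _) _; rewrite xn yn; lra.
have xy : x <> y by move=> e; move: Bp; rewrite e subrr normr0 ltxx.
have xy' : x <> - y by move=> e; move: Ap; rewrite e addNr normr0 ltxx.
have := @HSP x y xn yn xy xy'.
rewrite ltr_pdivrMr; last by rewrite !mulr_gt0.
set A := `|x + y| in hA Ale Ap *; set B := `|x - y| in hB Bp Ble *.
move=> h.
have h1 : k * A * B <= k * 2 * B by rewrite ler_pM2r // ler_wpM2l.
have h2 : (2 - 3/1000) ^+ 2 <= A ^+ 2 by rewrite lerXn2r ?nnegrE; lra.
have Bl : 798/1000 <= B by lra.
have h3 : (34/1000) * (798/1000) <= (B - 4 * k) * B.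
  by apply: ler_pM; lra.
have e1 : k * (2 * A * B) = 2 * (k * A * B) by ring.
have e2 : (B - 4 * k) * B = B ^+ 2 - 2 * (k * 2 * B) by ring.
rewrite e1 in h; rewrite e2 in h3.
move: h h1 h2 h3; set P := k * A * B; set Q := k * 2 * B; set A2 := A ^+ 2; set B2 := B ^+ 2.
move=> *; lra.
Qed.

Lemma scaled_key (d : R) (a b : X) : 0 < d -> `|a| <= d -> `|b| <= d ->
  4/5 * d <= `|a - b| -> `|a + b| <= (2 - 1/1000) * d.
Proof.
move=> d0 ad bd abd.
have dd : d^-1 * d = 1 by rewrite mulVf // gt_eqF.
have di : 0 < d^-1 by rewrite invr_gt0.
have := @unit_key (d^-1 *: a) (d^-1 *: b).
rewrite -scalerDr -scalerBr !normrZ ger0_norm; last by rewrite invr_ge0 ltW.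
move=> h.
have h1 : d^-1 * `|a| <= 1 by nra.
have h2 : d^-1 * `|b| <= 1 by nra.
have h3 : 4/5 <= d^-1 * `|a - b| by nra.
have := h h1 h2 h3; nra.
Qed.
End Aux.

Theorem theorem5p4 (R : realType) (X : completeNormedModType R) :
  dim_ge2 X ->
  (SP_const X < ((3 - Num.sqrt 5) / 4)%:E)%E ->
  uniform_normal_structure X.
Proof.
move=> _ hSP.
set k := (3 - Num.sqrt 5) / 4 in hSP.
have s5 := sqrtr_ge0 (5 : R).
have s5e : Num.sqrt (5 : R) ^+ 2 = 5 by rewrite sqr_sqrtr.
have k0 : 0 <= k by rewrite /k; nra.
have k1 : 0 <= 191/1000 - k by rewrite /k; nra.
have HSP : forall x y : X, `|x| = 1 -> `|y| = 1 -> x <> y -> x <> - y ->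
  (`|x + y| ^+ 2 + `|x - y| ^+ 2 - 4) / (2 * `|x + y| * `|x - y|) < k.
  move=> x y xn yn xy xy'; rewrite -lte_fin; apply: le_lt_trans hSP.
  by apply: ereal_sup_ubound; exists (x, y).
have key := @scaled_key R X k k0 k1 HSP.
rewrite /uniform_normal_structure.
apply: (@lt_le_trans _ _ (2000/1999 : R)%:E); first by rewrite lte_fin; lra.
apply: le_ereal_inf_tmp => _ [A [bA [cA [cvA dpos]]] <-].
rewrite lee_fin.
have [M HM] : exists M, forall x, A x -> `|x| <= M.
  case: bA => M [_ HM]; exists (M + 1) => x Ax.
  by apply: (HM (M + 1)) => //; rewrite ltrDl.
have F1 : forall p q, A p -> A q -> (`|p - q|%:E <= diam A)%E.
  by move=> p q Ap Aq; apply: ereal_sup_ubound; exists (p, q).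
have Dle : (diam A <= (2 * M)%:E)%E.
  apply: ge_ereal_sup => _ [[p q] /= [Ap Aq] <-]; rewrite lee_fin.
  apply: le_trans (ler_normB _ _) _; have := HM _ Ap; have := HM _ Aq; lra.
case Ed: (diam A) dpos Dle F1 => [d| |] //= dpos Dle F1.
rewrite lte_fin in dpos.
have : (((4/5) * d)%:E < diam A)%E by rewrite Ed lte_fin; lra.
move=> /ereal_sup_gt [_ [[p q] /= [Ap Aq] <-]]; rewrite lte_fin => pq.
set m := (1/2 : R) *: (p + q).
have Am : A m.
  have := cvA p q (1/2) Ap Aq ltac:(lra) ltac:(lra).
  have -> : (1 - 1/2 : R) = 1/2 by lra.
  by rewrite /m scalerDr.
have Hm : forall z, A z -> `|z - m| <= (1999/2000) * d.
  move=> z Az.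
  have e : z - m = (1/2 : R) *: ((z - p) + (z - q)).
    have h2 : (1/2 + 1/2 : R) = 1 by lra.
    by rewrite addrACA -opprD scalerBr scalerDr -scalerDl h2 scale1r.
  rewrite e normrZ ger0_norm; last by lra.
  have h1 := F1 z p Az Ap; have h2 := F1 z q Az Aq.
  rewrite lee_fin in h1; rewrite lee_fin in h2.
  have h3 : 4/5 * d <= `|(z - p) - (z - q)|.
    by rewrite opprB addrC addrA subrK distrC; lra.
  have := key d (z - p) (z - q) dpos h1 h2 h3; lra.
have Rhi : (cheb_radius A <= ((1999/2000) * d)%:E)%E.
  rewrite /cheb_radius.
  apply: (@le_trans _ _ (ereal_sup [set (`|x - m|)%:E | x in A])).
    by apply: ereal_inf_lbound; exists m.
  by apply: ge_ereal_sup => _ [z Az <-]; rewrite lee_fin; exact: Hm.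
have Rlo : (((2/5) * d)%:E <= cheb_radius A)%E.
  apply: le_ereal_inf_tmp => _ [y Ay <-].
  have t : `|p - q| <= `|p - y| + `|q - y|.
    by have := ler_normB (p - y) (q - y); rewrite opprB addrA subrK.
  have [h|h] := leP (`|p - q| / 2) `|p - y|.
    apply: (@le_trans _ _ (`|p - y|)%:E); first by rewrite lee_fin; lra.
    by apply: ereal_sup_ubound; exists p.
  apply: (@le_trans _ _ (`|q - y|)%:E); first by rewrite lee_fin; lra.
  by apply: ereal_sup_ubound; exists q.
case Er: (cheb_radius A) Rlo Rhi => [r| |] //= Rlo Rhi.
rewrite lee_fin in Rlo; rewrite lee_fin in Rhi.
have r0 : 0 < r by lra.
rewrite ler_pdivlMr //; nra.
Qed.
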